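(* For any field $\mathbb{F}$ and any matrix $M\in\mathbb{F}^{2\times2}$, the $8\times 8$ matrix $M^{\otimes 3}$ satisfies $\mathcal{R}_{M^{\otimes 3}}(1)\le 23$.
   Context: $\mathcal{R}_A(r)=\min\{\mathrm{nnz}(B):\mathrm{rank}(A+B)\le r\}$ is the rank-$r$ rigidity of $A$ over $\mathbb{F}$ (minimum number of entries to change to get rank $\le r$). *)

(* Defs.v *)
From mathcomp Require Import all_boot all_algebra.
From mathcomp Require Import mxtens.
From mathcomp Require Import boolp.
Set Implicit Arguments. Unset Strict Implicit. Unset Printing Implicit Defensive.
Import GRing.Theory.
Local Open Scope ring_scope.

Definition nnz (F : fieldType) (m n : nat) (B : 'M[F]_(m, n)) : nat :=
  #|[set ij : 'I_m * 'I_n | B ij.1 ij.2 != 0]|.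

Definition rig_pred (F : fieldType) (m n : nat) (A : 'M[F]_(m, n)) (r : nat)
  : pred nat :=
  fun k => `[< exists B : 'M[F]_(m, n), nnz B = k /\ (\rank (A + B)%R <= r)%N >].

Lemma rig_pred_ex (F : fieldType) (m n : nat) (A : 'M[F]_(m, n)) (r : nat) :
  exists k, rig_pred A r k.
Proof.
exists (nnz (- A)); apply/asboolP; exists (- A); split => //.
by rewrite addrN mxrank0.
Qed.

Definition rigidity (F : fieldType) (m n : nat) (A : 'M[F]_(m, n)) (r : nat)
  : nat := ex_minn (rig_pred_ex A r).

(* Main.v *)
Require Import Defs.
From mathcomp Require Import all_boot all_algebra.
From mathcomp Require Import mxtens.
From mathcomp Require Import boolp ring.
Set Implicit Arguments. Unset Strict Implicit. Unset Printing Implicit Defensive.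
Import GRing.Theory.
Local Open Scope ring_scope.

Lemma key (F : fieldType) (A : 'M[F]_(2^3)) (f g : nat -> F)
  (S : nat -> nat -> bool) :
  (forall i j : 'I_(2^3), S i j -> f i * g j = A i j) ->
  (#|[set ij : 'I_(2^3) * 'I_(2^3) | ~~ S ij.1 ij.2]| <= 23)%N ->
  (rigidity A 1 <= 23)%N.
Proof.
move=> HS Hc.
pose R : 'M[F]_(2^3) := (\col_(i < 2^3) f i) *m (\row_(j < 2^3) g j).
have HR : forall i j, R i j = f i * g j.
  by move=> i j; rewrite !mxE big_ord1 !mxE.
pose B := R - A.
rewrite /rigidity; case: ex_minnP => k _ Hmin.
apply: leq_trans (Hmin (nnz B) _) _.
  apply/asboolP; exists B; split=> //.
  rewrite /B addrC subrK.
  apply: leq_trans (mxrankM_maxl _ _) _; exact: rank_leq_col.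
apply: leq_trans Hc; apply: subset_leq_card; apply/subsetP => -[i j].
rewrite !inE /=; apply: contra => Hs.
by rewrite /B mxE HR HS // mxE subrr eqxx.
Qed.

Lemma card_sum n (P : nat -> nat -> bool) :
  #|[set ij : 'I_n * 'I_n | P ij.1 ij.2]| = \sum_(i < n) \sum_(j < n) (P i j : nat).
Proof.
rewrite cardsE -sum1_card big_mkcond pair_big /=.
by apply: eq_bigr => -[i j] _.
Qed.

Definition bt (k i : nat) : nat := nth 0%N (nth [::] [:: [::0;0;0;0;1;1;1;1]; [::0;0;1;1;0;0;1;1]; [::0;1;0;1;0;1;0;1]]%N k) i.
Definition M' (F : fieldType) (M : 'M[F]_2) (n m : nat) := M (inord n) (inord m).
Arguments M' {F}.
Lemma bitsA k : (k < 2^3)%N -> [/\ k %/ 2^2 = bt 0 k, (k %% 2^2) %/ 2 = bt 1 k & (k %% 2^2) %% 2 = bt 2 k]%N.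
Proof. by do 8 (case: k => [|k] //). Qed.
Lemma bitsB k : [/\ bt 0 k < 2, bt 1 k < 2 & bt 2 k < 2]%N.
Proof. by do 8 (case: k => [|k] //); rewrite /bt /= !nth_nil. Qed.

Lemma Aent (F : fieldType) (M : 'M[F]_2) (i j : 'I_(2^3)) :
  (M ^t 3) i j = M' M (bt 0 i) (bt 0 j) * (M' M (bt 1 i) (bt 1 j) * M' M (bt 2 i) (bt 2 j)).
Proof.
rewrite ntensmxSS ntensmx2.
rewrite !mxE /M'.
congr (M _ _ * (M _ _ * M _ _)); apply: val_inj; rewrite /= inordK.
all: move: (@bitsA i (ltn_ord i)) (@bitsA j (ltn_ord j)) (bitsB i) (bitsB j).
all: by move=> [? ? ?] [? ? ?] [? ? ?] [? ? ?].
Qed.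
Definition tad : seq (seq bool) :=
 [:: [:: false; true; true; true; true; true; true; true];
     [:: true; true; false; true; false; true; false; true];
     [:: true; false; true; true; false; false; true; true];
     [:: true; true; true; false; false; true; true; false];
     [:: true; false; false; false; true; true; true; true];
     [:: true; true; false; true; true; false; true; false];
     [:: true; false; true; true; true; true; false; false];
     [:: true; true; true; false; true; false; false; false]].
Definition Sad (i j : nat) := nth false (nth [::] tad i) j.
Definition fad (F : fieldType) (M : 'M[F]_2) : seq F :=
  let a := M' M 0 0 in let b := M' M 0 1 in let c := M' M 1 0 in let d := M' M 1 1 in
  [:: b / d; 1; 1; c / a; 1; c / a; c / a; c ^+ 2 / a ^+ 2].
Definition gad (F : fieldType) (M : 'M[F]_2) : seq F :=
  let a := M' M 0 0 in let b := M' M 0 1 in let c := M' M 1 0 in let d := M' M 1 1 in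
  [:: a ^+ 2 * c; a ^+ 2 * d; a ^+ 2 * d; a * b * d; a ^+ 2 * d; a * b * d; a * b * d; b ^+ 2 * d].
Arguments fad {F}.
Arguments gad {F}.
Lemma agree_ad (F : fieldType) (M : 'M[F]_2) : M' M 0 0 != 0 -> M' M 1 1 != 0 ->
  forall i j : 'I_(2^3), Sad i j -> nth 0 (fad M) i * nth 0 (gad M) j = (M ^t 3) i j.
Proof.
move=> Ha Hd i j; rewrite Aent; case: i => i Hi; case: j => j Hj /=.
move: Hi Hj; do 8 (try (case: i => [|i])); try by [].
all: do 8 (try (case: j => [|j])); try by [].
all: rewrite /Sad /bt /fad /gad /=; try by [].
all: move=> _ _ _; field.
all: by rewrite ?Ha ?Hd.
Qed.

Lemma card_ad : #|[set ij : 'I_(2^3) * 'I_(2^3) | ~~ Sad ij.1 ij.2]| = 23.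
Proof. rewrite (@card_sum _ (fun i j => ~~ Sad i j)). by rewrite !big_ord_recr !big_ord0 /=. Qed.


Definition tbc : seq (seq bool) :=
 [:: [:: true; true; true; true; true; true; true; false];
     [:: true; false; true; false; true; false; true; true];
     [:: true; true; false; false; true; true; false; true];
     [:: false; true; true; false; false; true; true; true];
     [:: true; true; true; true; false; false; false; true];
     [:: false; true; false; true; true; false; true; true];
     [:: false; false; true; true; true; true; false; true];
     [:: false; false; false; true; false; true; true; true]].
Definition Sbc (i j : nat) := nth false (nth [::] tbc i) j.
Lemma card_bc : #|[set ij : 'I_(2^3) * 'I_(2^3) | ~~ Sbc ij.1 ij.2]| = 23.
Proof. rewrite (@card_sum _ (fun i j => ~~ Sbc i j)). by rewrite !big_ord_recr !big_ord0 /=. Qed.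
Definition fbc (F : fieldType) (M : 'M[F]_2) : seq F :=
  let a := M' M 0 0 in let b := M' M 0 1 in let c := M' M 1 0 in let d := M' M 1 1 in
  [:: a * b / c; b; b; d; b; d; d; d ^+ 2 / b].
Definition gbc (F : fieldType) (M : 'M[F]_2) : seq F :=
  let a := M' M 0 0 in let b := M' M 0 1 in let c := M' M 1 0 in let d := M' M 1 1 in
  [:: a ^+ 2 * c / b; a * c; a * c; b * c; a * c; b * c; b * c; b * d].
Arguments fbc {F}.
Arguments gbc {F}.
Lemma agree_bc (F : fieldType) (M : 'M[F]_2) : M' M 0 1 != 0 -> M' M 1 0 != 0 ->
  forall i j : 'I_(2^3), Sbc i j -> nth 0 (fbc M) i * nth 0 (gbc M) j = (M ^t 3) i j.
Proof.
move=> Hb Hc i j; rewrite Aent; case: i => i Hi; case: j => j Hj /=.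
move: Hi Hj; do 8 (try (case: i => [|i])); try by [].
all: do 8 (try (case: j => [|j])); try by [].
all: rewrite /Sbc /bt /fbc /gbc /=; try by [].
all: move=> _ _ _; field.
all: by rewrite ?Hb ?Hc.
Qed.

Lemma rank1 (F : fieldType) (M : 'M[F]_2) (x y : seq F) :
  (forall i j : 'I_2, M' M i j = nth 0 x i * nth 0 y j) ->
  (rigidity (M ^t 3) 1 <= 23)%N.
Proof.
move=> Hxy.
pose u : 'cV[F]_2 := \col_(i < 2) nth 0 x i.
pose v : 'rV[F]_2 := \row_(j < 2) nth 0 y j.
have HM : M = u *m v.
  apply/matrixP => i j; rewrite !mxE big_ord1 !mxE -Hxy /M'.
  by rewrite !inord_val.
rewrite /rigidity; case: ex_minnP => k _ Hmin.
apply: leq_trans (Hmin (nnz (0 : 'M[F]_(2^3))) _) _.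
  apply/asboolP; exists 0; split=> //.
  rewrite addr0 ntensmxSS ntensmx2 HM -!tensmx_mul.
  apply: leq_trans (mxrankM_maxl _ _) _; exact: rank_leq_col.
rewrite /nnz; apply: (@leq_trans 0) => //.
rewrite leqn0 cards_eq0; apply/eqP/setP => ij; rewrite !inE mxE eqxx //.
Qed.

Theorem mainTheorem7 (F : fieldType) (M : 'M[F]_2) :
  (rigidity (M ^t 3) 1 <= 23)%N.
Proof.
case: (boolP ((M' M 0 0 != 0) && (M' M 1 1 != 0))) => [/andP[Ha Hd]|H1].
  apply: (@key F (M ^t 3) (fun i => nth 0 (fad M) i) (fun j => nth 0 (gad M) j) Sad).
    exact: agree_ad.
  by rewrite card_ad.
case: (boolP ((M' M 0 1 != 0) && (M' M 1 0 != 0))) => [/andP[Hb Hc]|H2].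
  apply: (@key F (M ^t 3) (fun i => nth 0 (fbc M) i) (fun j => nth 0 (gbc M) j) Sbc).
    exact: agree_bc.
  by rewrite card_bc.
move: H1 H2; rewrite !negb_and !negbK => /orP[/eqP Ha|/eqP Hd] /orP[/eqP Hb|/eqP Hc].
- apply: (@rank1 F M [:: 0; 1] [:: M' M 1 0; M' M 1 1]) => -[[|[|i]] Hi] [[|[|j]] Hj] //=;
  by rewrite ?Ha ?Hb ?Hc ?Hd ?mul0r ?mulr0 ?mul1r ?mulr1.
- apply: (@rank1 F M [:: M' M 0 1; M' M 1 1] [:: 0; 1]) => -[[|[|i]] Hi] [[|[|j]] Hj] //=;
  by rewrite ?Ha ?Hb ?Hc ?Hd ?mul0r ?mulr0 ?mul1r ?mulr1.
- apply: (@rank1 F M [:: M' M 0 0; M' M 1 0] [:: 1; 0]) => -[[|[|i]] Hi] [[|[|j]] Hj] //=;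
  by rewrite ?Ha ?Hb ?Hc ?Hd ?mul0r ?mulr0 ?mul1r ?mulr1.
- apply: (@rank1 F M [:: 1; 0] [:: M' M 0 0; M' M 0 1]) => -[[|[|i]] Hi] [[|[|j]] Hj] //=;
  by rewrite ?Ha ?Hb ?Hc ?Hd ?mul0r ?mulr0 ?mul1r ?mulr1.
Qed.
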